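(* Let $\mathcal C$ be a category, $A$ a zigzag of length $n$ in $\mathcal C$, and $i\in[n+1]$ (i.e. $0\le i\le n$). Let $A'$ be the zigzag of length $n+1$ obtained from $A$ by inserting the identity cospan $A(r_i)\xrightarrow{\mathrm{id}}A(r_i)\xleftarrow{\mathrm{id}}A(r_i)$ at position $i$, i.e. $A'(r_j)=A(r_j)$ and $A'(s_j)=A(s_j)$ for $j<i$, $A'(r_i)=A'(s_i)=A'(r_{i+1})=A(r_i)$ with identity legs, and $A'(r_{j+1})=A(r_j)$, $A'(s_{j+1})=A(s_j)$ for $j\ge i$ (with the cospan legs of $A$). Then the zigzag map $f:A\to A'$ whose singular map is the face map $d_i:[n]\to[n+1]$ and all of whose regular and singular slices are identities is $\pi$-cocartesian.
   Context: Notation: for $n\ge 0$, $[n]$ denotes $\{0,\dots,n-1\}$; $\Delta_+$ is the category of these finite total orders and order-preserving maps. The $i$-th face map $d_i:[n]\to[n+1]$ is the unique injective order-preserving map omitting $i$ from its image. For monotone $\varphi:[n]\to[m]$ define $\hat\varphi:[m+1]\to[n+1]$ by $\hat\varphi(i)=\min(\{j\in[n]:\varphi(j)\ge i\}\cup\{n\})$. Zigzags: in a category $\mathcal C$, a zigzag $X$ of length $n$ is a diagram $X(r_0)\xrightarrow{x_0} X(s_0)\xleftarrow{x'_0} X(r_1)\to\cdots\xrightarrow{x_{n-1}} X(s_{n-1})\xleftarrow{x'_{n-1}} X(r_n)$. A zigzag map $f:X\to Y$ (lengths $n$, $m$) consists of a monotone $f_s:[n]\to[m]$, regular slices $f(r_i):X(r_{\hat{f_s}(i)})\to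 Y(r_i)$ for $0\le i\le m$ and singular slices $f(s_j):X(s_j)\to Y(s_{f_s(j)})$ for $0\le j<n$, such that for each $0\le i<m$: if $f_s^{-1}(i)\neq\emptyset$ with least element $p$, greatest $q$, then $f(s_p)\circ x_p=y_i\circ f(r_i)$, $f(s_q)\circ x'_q=y'_i\circ f(r_{i+1})$, $f(s_j)\circ x'_j=f(s_{j+1})\circ x_{j+1}$ for $p\le j<q$; if $f_s^{-1}(i)=\emptyset$ then $y_i\circ f(r_i)=y'_i\circ f(r_{i+1})$. Composition: $(g\circ f)_s=g_s\circ f_s$, $(g\circ f)(s_j)=g(s_{f_s(j)})\circ f(s_j)$, $(g\circ f)(r_i)=g(r_i)\circ f(r_{\hat{g_s}(i)})$. This gives the category $Z(\mathcal C)$. The functor $\pi:Z(\mathcal C)\to\Delta_+$ sends a zigzag of length $n$ to $[n]$ and $f$ to $f_s$. A map $f:x\to y$ is $\pi$-cocartesian if for every map $h:x\to y'$ and every $u:\pi(y)\to\pi(y')$ with $u\circ\pi(f)=\pi(h)$ there is a unique $v:y\to y'$ with $v\circ f=h$ and $\pi(v)=u$. *)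

(* Defs.v *)
(* Categories are given in the (equivalent, standard)
   "arrows-only"/one-sorted presentation: objects, morphisms, domain, codomain,
   identities and a composition g∘f that is meaningful when cod f = dom g. *)
From mathcomp Require Import all_boot.
Set Implicit Arguments. Unset Strict Implicit. Unset Printing Implicit Defensive.

Record Category := MkCategory {
  Ob : Type;
  Mor : Type;
  dom : Mor -> Ob;
  cod : Mor -> Ob;
  idm : Ob -> Mor;
  comp : Mor -> Mor -> Mor;            (* comp g f = g ∘ f *)
  dom_id : forall a, dom (idm a) = a;
  cod_id : forall a, cod (idm a) = a;
  dom_comp : forall g f, cod f = dom g -> dom (comp g f) = dom f;
  cod_comp : forall g f, cod f = dom g -> cod (comp g f) = cod g;
  comp_id_l : forall f, comp (idm (cod f)) f = f;
  comp_id_r : forall f, comp f (idm (dom f)) = f;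
  comp_assoc : forall h g f, cod f = dom g -> cod g = dom h ->
     comp h (comp g f) = comp (comp h g) f }.

Arguments dom {c} : rename. Arguments cod {c} : rename. Arguments idm {c} : rename. Arguments comp {c} : rename.

(* Morphisms of Delta_+ : monotone maps [n] -> [m], [n] = 'I_n. *)
Definition monotone n m (f : 'I_n -> 'I_m) : Prop :=
  forall x y : 'I_n, x <= y -> f x <= f y.

Definition hat n m (f : 'I_n -> 'I_m) (i : 'I_m.+1) : 'I_n.+1 :=
  inord (\big[minn/n]_(j < n | i <= f j) j).

(* A zigzag of length zlen: regular objects r_0..r_n, singular s_0..s_{n-1},
   forward legs x_j : r_j -> s_j, backward legs x'_j : r_{j+1} -> s_j. *)
Record zigzag (C : Category) := Zigzag {
  zlen : nat;
  zr : 'I_zlen.+1 -> Ob C;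
  zs : 'I_zlen -> Ob C;
  zf : 'I_zlen -> Mor C;
  zb : 'I_zlen -> Mor C }.

Arguments zlen {C}. Arguments zr {C}. Arguments zs {C}. Arguments zf {C}. Arguments zb {C}.

Definition is_zigzag (C : Category) (X : zigzag C) : Prop :=
  forall j : 'I_(zlen X),
    [/\ dom (zf X j) = zr X (widen_ord (leqnSn _) j),
        cod (zf X j) = zs X j,
        dom (zb X j) = zr X (lift ord0 j)
      & cod (zb X j) = zs X j].

Record zmap (C : Category) (X Y : zigzag C) := ZMap {
  zms : 'I_(zlen X) -> 'I_(zlen Y);          (* singular map f_s *)
  zmr : 'I_(zlen Y).+1 -> Mor C;             (* regular slices f(r_i) *)
  zmsg : 'I_(zlen X) -> Mor C }.             (* singular slices f(s_j) *)

Arguments zms {C X Y}. Arguments zmr {C X Y}. Arguments zmsg {C X Y}.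

Definition is_zmap (C : Category) (X Y : zigzag C) (f : zmap X Y) : Prop :=
  [/\ is_zigzag X, is_zigzag Y & monotone (zms f)] /\
  [/\
      (forall i : 'I_(zlen Y).+1,
          dom (zmr f i) = zr X (hat (zms f) i) /\ cod (zmr f i) = zr Y i),
      (forall j : 'I_(zlen X),
          dom (zmsg f j) = zs X j /\ cod (zmsg f j) = zs Y (zms f j)),
      (forall (i : 'I_(zlen Y)) (p q : 'I_(zlen X)),
          zms f p = i -> zms f q = i ->
          (forall j, zms f j = i -> p <= j <= q) ->
          [/\ comp (zmsg f p) (zf X p) = comp (zf Y i) (zmr f (widen_ord (leqnSn _) i)),
              comp (zmsg f q) (zb X q) = comp (zb Y i) (zmr f (lift ord0 i))
            & forall j j' : 'I_(zlen X), p <= j < q -> (j' : nat) = j.+1 ->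
                comp (zmsg f j) (zb X j) = comp (zmsg f j') (zf X j')])
    &
      (forall i : 'I_(zlen Y), (forall j, zms f j <> i) ->
          comp (zf Y i) (zmr f (widen_ord (leqnSn _) i))
          = comp (zb Y i) (zmr f (lift ord0 i)))].

Definition zcomp (C : Category) (X Y Z : zigzag C) (g : zmap Y Z) (f : zmap X Y)
  : zmap X Z :=
  {| zms := zms g \o zms f;
     zmr := fun i => comp (zmr g i) (zmr f (hat (zms g) i));
     zmsg := fun j => comp (zmsg g (zms f j)) (zmsg f j) |}.

Definition pi_cocartesian (C : Category) (X Y : zigzag C) (f : zmap X Y) : Prop :=
  forall (Y' : zigzag C) (h : zmap X Y'), is_zmap h ->
  forall u : 'I_(zlen Y) -> 'I_(zlen Y'), monotone u ->
    u \o zms f = zms h ->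
    exists! v : zmap Y Y', [/\ is_zmap v, zcomp v f = h & zms v = u].

(* F applied to k viewed as an element of 'I_n (d if k >= n; never used out of range) *)
Definition ord_app (T : Type) n (F : 'I_n -> T) (d : T) (k : nat) : T :=
  if (insub k : option 'I_n) is Some k0 then F k0 else d.

Section Insert.
Variables (C : Category) (A : zigzag C) (i : 'I_(zlen A).+1).

Definition ins_reg (k : 'I_(zlen A).+2) : Ob C :=
  zr A (inord (if k <= i then (k : nat) else k.-1)).

Definition ins_sing (j : 'I_(zlen A).+1) : Ob C :=
  if j < i then ord_app (zs A) (zr A i) j
  else if j == i then zr A i
  else ord_app (zs A) (zr A i) j.-1.

Definition ins_fw (j : 'I_(zlen A).+1) : Mor C :=
  if j < i then ord_app (zf A) (idm (zr A i)) j
  else if j == i then idm (zr A i)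
  else ord_app (zf A) (idm (zr A i)) j.-1.

Definition ins_bw (j : 'I_(zlen A).+1) : Mor C :=
  if j < i then ord_app (zb A) (idm (zr A i)) j
  else if j == i then idm (zr A i)
  else ord_app (zb A) (idm (zr A i)) j.-1.

Definition insert_id : zigzag C :=
  {| zlen := (zlen A).+1; zr := ins_reg; zs := ins_sing; zf := ins_fw; zb := ins_bw |}.

(* The map A -> A' with singular map the face map d_i (= lift i) and identity slices *)
Definition face_zmap : zmap A insert_id :=
  @ZMap C A insert_id
    (lift i : 'I_(zlen A) -> 'I_(zlen A).+1)
    (fun k => idm (zr insert_id k))
    (fun j => idm (zs A j)).
End Insert.

Arguments insert_id {C} A i.
Arguments face_zmap {C} A i.

(* Main.v *)
Require Import Defs.
From mathcomp Require Import all_boot zify.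
From Stdlib Require Import FunctionalExtensionality.
Require Import Defs.
Set Implicit Arguments. Unset Strict Implicit.


Lemma hat_le n m (f : 'I_n -> 'I_m) (k : 'I_m.+1) : hat f k <= n.
Proof.
rewrite /hat inordK; last first.
  rewrite ltnS; apply: (big_ind (fun b => b <= n)) => //; [lia|move=> x _; exact: ltnW].
apply: (big_ind (fun b => b <= n)) => //; [lia|move=> x _; exact: ltnW].
Qed.

Lemma hat_val n m (f : 'I_n -> 'I_m) (k : 'I_m.+1) : val (hat f k) = \big[minn/n]_(j < n | k <= f j) j.
Proof.
rewrite /hat /= inordK // ltnS; apply: (big_ind (fun b => b <= n)) => //; [lia|move=> x _; exact: ltnW].
Qed.

Lemma bigmin_le (I : eqType) (r : seq I) (P : pred I) (F : I -> nat) d j :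
  j \in r -> P j -> \big[minn/d]_(x <- r | P x) F x <= F j.
Proof.
elim: r => // x r IH; rewrite inE big_cons => /orP [/eqP <- ->|/IH H Pj].
  exact: geq_minl.
case: (P x); last exact: H Pj.
by apply: leq_trans (geq_minr _ _) (H Pj).
Qed.

Lemma hat_spec n m (f : 'I_n -> 'I_m) (k : 'I_m.+1) (j : 'I_n) : monotone f ->
  (k <= f j) = (hat f k <= j).
Proof.
move=> mf; rewrite hat_val; apply/idP/idP => H.
  by apply: bigmin_le => //; exact: mem_index_enum.
have : n <= \big[minn/n]_(j < n | k <= f j) j \/
       exists j0 : 'I_n, k <= f j0 /\ val j0 = \big[minn/n]_(j < n | k <= f j) j.
  apply: (big_ind (fun b => n <= b \/ exists j0 : 'I_n, k <= f j0 /\ val j0 = b)).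
  - by left.
  - by move=> x y Hx Hy; case: (leqP x y).
  - by move=> j0 Hj0; right; exists j0.
case=> [Hn|[j0 [Hk Hj0]]].
  have := ltn_ord j; lia.
rewrite -Hj0 in H; apply: leq_trans Hk _; exact: mf.
Qed.

Lemma hat_unique n m (f : 'I_n -> 'I_m) (k : 'I_m.+1) (c : nat) : monotone f -> c <= n ->
  (forall j : 'I_n, (k <= f j) = (c <= j)) -> val (hat f k) = c.
Proof.
move=> mf cn Hc; have Hn := hat_le f k.
case: (ltngtP c (hat f k)) => // H.
  have cn' : c < n by lia.
  have := Hc (Ordinal cn'); rewrite /= leqnn hat_spec //=; lia.
have hn' : hat f k < n by lia.
have := Hc (Ordinal hn'); rewrite /= hat_spec //= leqnn; lia.
Qed.

Lemma hat_comp n m l (f : 'I_n -> 'I_m) (g : 'I_m -> 'I_l) k :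
  monotone f -> monotone g -> hat (g \o f) k = hat f (hat g k).
Proof.
move=> mf mg; apply/val_inj => /=; apply: hat_unique.
- by move=> x y xy; apply: mg; apply: mf.
- exact: hat_le.
by move=> j; rewrite /= hat_spec // hat_spec.
Qed.

Lemma lift_mono n (i : 'I_n.+1) : monotone (lift i : 'I_n -> 'I_n.+1).
Proof. by move=> x y; rewrite /= leq_bump2. Qed.

Lemma hat_lift n (i : 'I_n.+1) (k : 'I_n.+2) :
  val (hat (lift i : 'I_n -> 'I_n.+1) k) = if k <= i then (k : nat) else k.-1.
Proof.
apply: hat_unique; first exact: lift_mono.
  have := ltn_ord k; have := ltn_ord i; case: ifP; lia.
move=> j; rewrite /= /bump; have := ltn_ord k; have := ltn_ord i.
case: (leqP i j) => ij; case: (leqP k i) => ki /=; lia.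
Qed.

Lemma ord_app_ord T n (F : 'I_n -> T) d (j : 'I_n) (k : nat) : k = j -> ord_app F d k = F j.
Proof. by move=> ->; rewrite /ord_app valK. Qed.

Section Ins.
Variables (C : Category) (A : zigzag C) (i : 'I_(zlen A).+1).
Local Notation n := (zlen A).

Lemma zrE (x y : 'I_n.+1) : (x : nat) = y -> zr A x = zr A y.
Proof. by move/val_inj->. Qed.

Lemma lift_val (j : 'I_n) : (lift i j : nat) = if i <= j then j.+1 else j.
Proof. by rewrite /= /bump; case: (i <= j). Qed.

Lemma ins_reg_hat (k : 'I_n.+2) : zr A (hat (lift i : 'I_n -> 'I_n.+1) k) = ins_reg i k.
Proof.
rewrite /ins_reg; apply: zrE; rewrite hat_lift inordK //.
have := ltn_ord k; have := ltn_ord i; case: ifP; lia.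
Qed.

Lemma ins_sing_lift (j : 'I_n) : ins_sing i (lift i j) = zs A j.
Proof.
rewrite /ins_sing; move: (lift_val j) (neq_lift i j) (ltn_ord i) (ltn_ord j).
case: (leqP i j) => ij Hv Hne Hi Hj; rewrite Hv.
  have -> : (j.+1 < i) = false by lia.
  by rewrite eq_sym (negbTE Hne); apply: ord_app_ord.
have -> : (j < i) = true by lia.
by apply: ord_app_ord.
Qed.

Lemma ins_fw_lift (j : 'I_n) : ins_fw i (lift i j) = zf A j.
Proof.
rewrite /ins_fw; move: (lift_val j) (neq_lift i j) (ltn_ord i) (ltn_ord j).
case: (leqP i j) => ij Hv Hne Hi Hj; rewrite Hv.
  have -> : (j.+1 < i) = false by lia.
  by rewrite eq_sym (negbTE Hne); apply: ord_app_ord.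
have -> : (j < i) = true by lia.
by apply: ord_app_ord.
Qed.

Lemma ins_bw_lift (j : 'I_n) : ins_bw i (lift i j) = zb A j.
Proof.
rewrite /ins_bw; move: (lift_val j) (neq_lift i j) (ltn_ord i) (ltn_ord j).
case: (leqP i j) => ij Hv Hne Hi Hj; rewrite Hv.
  have -> : (j.+1 < i) = false by lia.
  by rewrite eq_sym (negbTE Hne); apply: ord_app_ord.
have -> : (j < i) = true by lia.
by apply: ord_app_ord.
Qed.

Lemma ins_sing_i : ins_sing i i = zr A i.
Proof. by rewrite /ins_sing ltnn eqxx. Qed.
Lemma ins_fw_i : ins_fw i i = idm (zr A i).
Proof. by rewrite /ins_fw ltnn eqxx. Qed.
Lemma ins_bw_i : ins_bw i i = idm (zr A i).
Proof. by rewrite /ins_bw ltnn eqxx. Qed.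

Lemma insert_zigzag : is_zigzag A -> is_zigzag (insert_id A i).
Proof.
move=> zA j /=.
case: (unliftP i j) => [j0 ->|->].
  have [H1 H2 H3 H4] := zA j0.
  rewrite ins_fw_lift ins_bw_lift ins_sing_lift H1 H2 H3 H4; split => //;
  rewrite /ins_reg; apply: zrE; rewrite /= /bump inordK; have := ltn_ord j0;
  have := ltn_ord i; case: (leqP i j0) => h; move: h; rewrite /= ?leq0n ?add1n ?add0n;
  case: ifP => /=; lia.
rewrite /= ins_fw_i ins_bw_i ins_sing_i dom_id cod_id; split => //;
rewrite /ins_reg; apply: zrE; rewrite /= ?leqnn ?ltnn inordK //; have := ltn_ord i; lia.
Qed.
End Ins.

Lemma zmap_ext (C : Category) (X Y : zigzag C) (f g : zmap X Y) :
  zms f = zms g -> zmr f =1 zmr g -> zmsg f =1 zmsg g -> f = g.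
Proof.
case: f => s r g1; case: g => s' r' g1' /= -> Hr Hg.
by rewrite (functional_extensionality _ _ Hr) (functional_extensionality _ _ Hg).
Qed.

Lemma bump_succ n (i : 'I_n) a b : bump i b = (bump i a).+1 -> b = a.+1.
Proof. rewrite /bump; case: (leqP i a); case: (leqP i b) => /=; lia. Qed.

Lemma ordE n (x y : 'I_n) : (x : nat) = y -> x = y.
Proof. exact: val_inj. Qed.

Section Cocart.
Variables (C : Category) (A : zigzag C) (i : 'I_(zlen A).+1) (Y : zigzag C)
  (h : zmap A Y) (u : 'I_(zlen A).+1 -> 'I_(zlen Y)).
Hypotheses (Hh : is_zmap h) (mu : monotone u) (Hu : u \o lift i = zms h).
Local Notation n := (zlen A).
Local Notation m := (zlen Y).

Lemma zA : is_zigzag A. Proof. by case: Hh => [[]]. Qed.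
Lemma zY : is_zigzag Y. Proof. by case: Hh => [[]]. Qed.
Lemma Ht1 k : dom (zmr h k) = zr A (hat (zms h) k) /\ cod (zmr h k) = zr Y k.
Proof. by case: Hh => _ [H1 _ _ _]. Qed.
Lemma Ht2 j : dom (zmsg h j) = zs A j /\ cod (zmsg h j) = zs Y (zms h j).
Proof. by case: Hh => _ [_ H2 _ _]. Qed.
Lemma Hfib : forall (k : 'I_m) (p q : 'I_n),
          zms h p = k -> zms h q = k ->
          (forall j, zms h j = k -> p <= j <= q) ->
          [/\ comp (zmsg h p) (zf A p) = comp (zf Y k) (zmr h (widen_ord (leqnSn _) k)),
              comp (zmsg h q) (zb A q) = comp (zb Y k) (zmr h (lift ord0 k))
            & forall j j' : 'I_n, p <= j < q -> (j' : nat) = j.+1 ->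
                comp (zmsg h j) (zb A j) = comp (zmsg h j') (zf A j')].
Proof. by case: Hh => _ [_ _ H3 _]. Qed.
Lemma Hemp : forall k : 'I_m, (forall j, zms h j <> k) ->
          comp (zf Y k) (zmr h (widen_ord (leqnSn _) k))
          = comp (zb Y k) (zmr h (lift ord0 k)).
Proof. by case: Hh => _ [_ _ _ H4]. Qed.

Lemma Hzu j : zms h j = u (lift i j).
Proof. by rewrite -Hu. Qed.

Lemma uE (x y : 'I_n.+1) : (x : nat) = y -> u x = u y.
Proof. by move/val_inj->. Qed.

Lemma Hhat k : zr A (hat (zms h) k) = ins_reg i (hat u k).
Proof. rewrite -Hu hat_comp; [exact: (@ins_reg_hat C A i _)|exact: lift_mono|exact: mu]. Qed.

Lemma squeeze (p q x : 'I_n.+1) k : u p = k -> u q = k -> p <= x <= q -> u x = k.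
Proof.
move=> Hp Hq /andP [px xq]; apply/val_inj/eqP; rewrite eqn_leq.
by apply/andP; split; [rewrite -Hq; exact: mu | rewrite -Hp; exact: mu].
Qed.

Definition first := [forall j : 'I_n.+1, (j < i) ==> (u j < u i)].

Lemma first_spec : first -> forall j : 'I_n.+1, u j = u i -> i <= j.
Proof.
move/forallP => H j Hj; have := H j; rewrite Hj ltnn implybF; lia.
Qed.

Lemma notfirst : ~~ first -> exists j0 : 'I_n,
  [/\ (j0 : nat).+1 = i, (lift i j0 : nat) = j0 & u (lift i j0) = u i].
Proof.
move/forallPn => [j]; rewrite negb_imply => /andP [ji Hu'].
have i0 : 0 < i by lia.
have Hlt : i.-1 < n by have := ltn_ord i; lia.
exists (Ordinal Hlt) => /=.
have Hl : (lift i (Ordinal Hlt) : nat) = i.-1 by rewrite /= /bump /=; case: leqP => /=; lia.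
split => //; first lia.
have uj : u j = u i. apply/val_inj/eqP; rewrite eqn_leq. rewrite -leqNgt in Hu'; apply/andP; split; [apply: mu; lia | exact: Hu'].
apply: (squeeze uj (erefl (u i))); rewrite Hl; lia.
Qed.

Definition sv_i : Mor C :=
  if first then comp (zf Y (u i)) (zmr h (widen_ord (leqnSn _) (u i)))
  else ord_app (fun j0 : 'I_n => comp (zmsg h j0) (zb A j0)) (idm (zr A i)) i.-1.

Definition sv (j' : 'I_n.+1) : Mor C :=
  if unlift i j' is Some j then zmsg h j else sv_i.

Definition v : zmap (insert_id A i) Y := @ZMap C (insert_id A i) Y u (zmr h) sv.

Lemma sv_lift j : sv (lift i j) = zmsg h j.
Proof. by rewrite /sv liftK. Qed.
Lemma sv_ii : sv i = sv_i.
Proof. by rewrite /sv unlift_none. Qed.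

Lemma sv_i_notfirst (j0 : 'I_n) : ~~ first -> (j0 : nat).+1 = i ->
  sv_i = comp (zmsg h j0) (zb A j0).
Proof.
move=> /negbTE nf Hj; rewrite /sv_i nf; apply: ord_app_ord; lia.
Qed.

Lemma sv_i_first : first -> sv_i = comp (zf Y (u i)) (zmr h (widen_ord (leqnSn _) (u i))).
Proof. by move=> f; rewrite /sv_i f. Qed.

Lemma hat_first : first -> (hat u (widen_ord (leqnSn _) (u i)) : nat) = i.
Proof.
move=> f; apply: hat_unique => //; first by have := ltn_ord i; lia.
move=> j /=; case: (leqP i j) => ij; first exact: mu.
apply/negbTE; rewrite -ltnNge.
move/forallP: f => /(_ j) /implyP; exact.
Qed.

Lemma sv_i_typ : dom sv_i = zr A i /\ cod sv_i = zs Y (u i).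
Proof.
case f : first.
  rewrite sv_i_first //.
  have [H1 H2] := Ht1 (widen_ord (leqnSn _) (u i)).
  have [F1 F2 _ _] := zY (u i).
  rewrite dom_comp ?cod_comp ?F2 ?H1 ?H2 ?F1 //.
  split => //; rewrite Hhat /ins_reg; apply: zrE; rewrite hat_first // leqnn inordK //.
have [j0 [J1 J2 J3]] := notfirst (negbT f).
rewrite (sv_i_notfirst (negbT f) J1).
have [H1 H2] := Ht2 j0; have [_ _ F1 F2] := zA j0.
rewrite dom_comp ?cod_comp ?F2 ?H1 ?H2 ?F1 // Hzu J3; split => //.
apply: zrE => /=; rewrite /bump /=; lia.
Qed.


Ltac splitifs := repeat match goal with |- context [if ?c then _ else _] => let H := fresh in case: (boolP c) => H end.

Lemma lv (j : 'I_n) : (lift i j : nat) = if i <= j then j.+1 else j.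
Proof. by rewrite /= /bump; case: (i <= j). Qed.

Lemma unl (j : 'I_n.+1) : (exists a : 'I_n, j = lift i a) \/ j = i.
Proof. by case: (unliftP i j) => [a ->|->]; [left; exists a | right]. Qed.

Lemma L1f j : comp (sv (lift i j)) (ins_fw i (lift i j)) = comp (zmsg h j) (zf A j).
Proof. by rewrite sv_lift ins_fw_lift. Qed.
Lemma L1b j : comp (sv (lift i j)) (ins_bw i (lift i j)) = comp (zmsg h j) (zb A j).
Proof. by rewrite sv_lift ins_bw_lift. Qed.
Lemma L2f : comp (sv i) (ins_fw i i) = sv_i.
Proof. by rewrite sv_ii ins_fw_i; have [D _] := sv_i_typ; rewrite -D comp_id_r. Qed.
Lemma L2b : comp (sv i) (ins_bw i i) = sv_i.
Proof. by rewrite sv_ii ins_bw_i; have [D _] := sv_i_typ; rewrite -D comp_id_r. Qed.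

Lemma v_fib (k : 'I_m) (p q : 'I_n.+1) : u p = k -> u q = k ->
  (forall j, u j = k -> p <= j <= q) ->
 [/\ comp (sv p) (ins_fw i p) = comp (zf Y k) (zmr h (widen_ord (leqnSn _) k)),
     comp (sv q) (ins_bw i q) = comp (zb Y k) (zmr h (lift ord0 k))
   & forall j j' : 'I_n.+1, p <= j < q -> (j' : nat) = j.+1 ->
       comp (sv j) (ins_bw i j) = comp (sv j') (ins_fw i j')].
Proof.
move=> Hp Hq Hpq.
have inF : forall x : 'I_n.+1, p <= x <= q -> u x = k := fun x => squeeze Hp Hq.
case: (eqVneq (u i) k) => Hik.
- have /andP [pi iq] := Hpq i Hik.
  have Hfp : first -> (p : nat) = i.
    move=> f; have := first_spec f (etrans Hp (esym Hik)); lia.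
  have Hnf : p < i -> ~~ first.
    by move=> pi'; apply/negP => /Hfp; lia.
  have Hfib_nf : ~~ first -> forall j0 : 'I_n, (j0 : nat).+1 = i -> p <= j0.
    move=> nf j0 J1; have [j1 [K1 K2 K3]] := notfirst nf.
    have -> : j0 = j1 by apply/val_inj => /=; lia.
    have /andP [H1 _] := Hpq _ (etrans K3 Hik); lia.
  case: (ltnP p q) => pq.
  + have Hp0 : (p:nat) < n by have := ltn_ord q; lia.
    have Hq0 : (q:nat).-1 < n by have := ltn_ord q; lia.
    pose p0 := Ordinal Hp0; pose q0 := Ordinal Hq0.
    have vp0 : (p0 : nat) = p by [].
    have vq0 : (q0 : nat) = q.-1 by [].
    have hp0 : zms h p0 = k by rewrite Hzu; apply: inF; rewrite lv vp0; splitifs; lia.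
    have hq0 : zms h q0 = k by rewrite Hzu; apply: inF; rewrite lv vq0; splitifs; lia.
    have hr : forall j, zms h j = k -> p0 <= j <= q0.
      move=> j; rewrite Hzu => /Hpq; rewrite lv vp0 vq0; splitifs; lia.
    have [E1 E2 E3] := Hfib hp0 hq0 hr.
    split.
    * case: (ltnP p i) => pi'.
        have -> : p = lift i p0 by apply: ordE; rewrite lv vp0; splitifs; lia.
        by rewrite L1f.
      have pe : p = i by apply/val_inj => /=; lia.
      have f : first.
        case f: first => //; have [j0 [J1 _ _]] := notfirst (negbT f).
        have := Hfib_nf (negbT f) j0 J1; lia.
      by rewrite pe L2f sv_i_first // Hik.
    * case: (ltnP i q) => iq'.
        have -> : q = lift i q0 by apply: ordE; rewrite lv vq0; splitifs; lia.
        by rewrite L1b.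
      have qe : q = i by apply/val_inj => /=; lia.
      have nf : ~~ first by apply: Hnf; lia.
      rewrite qe L2b (sv_i_notfirst (j0:=q0) nf) //; lia.
    * move=> j j' /andP [pj jq] Hj'.
      case: (unl j) => [[a Ej]|Ej]; case: (unl j') => [[b Ej']|Ej']; subst j j'.
      - rewrite L1b L1f; apply: E3; move: pj jq Hj'; rewrite ?vp0 ?vq0 !lv; splitifs; lia.
      - have Ha : (a : nat).+1 = i by move: Hj'; rewrite lv; splitifs; lia.
        have nf : ~~ first by apply: Hnf; move: pj; rewrite lv; splitifs; lia.
        by rewrite L1b L2f (sv_i_notfirst nf Ha).
      - have Hb : (b : nat) = i by move: Hj'; rewrite lv; splitifs; lia.
        rewrite L2b L1f.
        case f : first.
          have pb : b = p0 by apply: ordE; rewrite vp0 Hb Hfp.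
          by rewrite sv_i_first // Hik -E1 pb.
        have [j0 [J1 J2 J3]] := notfirst (negbT f).
        rewrite (sv_i_notfirst (negbT f) J1); apply: E3; last lia.
        have := Hfib_nf (negbT f) j0 J1; rewrite vp0 vq0; lia.
      - lia.
  + have pe : p = i by apply/val_inj => /=; lia.
    have qe : q = i by apply/val_inj => /=; lia.
    have f : first.
      case f: first => //; have [j0 [J1 _ _]] := notfirst (negbT f).
      have := Hfib_nf (negbT f) j0 J1; lia.
    have He : forall j, zms h j <> k.
      move=> j; rewrite Hzu => /Hpq; rewrite pe qe => H.
      have E : lift i j = i by apply/val_inj/eqP; rewrite eqn_leq andbC.
      by move: (neq_lift i j); rewrite E eqxx.
    split.
    * by rewrite pe L2f sv_i_first // Hik.
    * by rewrite qe L2b sv_i_first // Hik; exact: Hemp.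
    * move=> j j' /andP [pj jq]; lia.
- have Hni : forall x : 'I_n.+1, p <= x <= q -> x != i.
    move=> x Hx; apply/eqP => E; move: Hik; rewrite -E inF // eqxx //.
  have /andP [pp pq] := Hpq p Hp.
  case: (unl p) => [[p0 Ep]|Ep]; last by have := Hni p; rewrite leqnn pq Ep eqxx => /(_ isT).
  case: (unl q) => [[q0 Eq]|Eq]; last by have := Hni q; rewrite leqnn pq Eq eqxx andbT => /(_ isT).
  have hp0 : zms h p0 = k by rewrite Hzu -Ep.
  have hq0 : zms h q0 = k by rewrite Hzu -Eq.
  have hr : forall j, zms h j = k -> p0 <= j <= q0.
    move=> j; rewrite Hzu => /Hpq; rewrite Ep Eq !lv; splitifs; lia.
  have [E1 E2 E3] := Hfib hp0 hq0 hr.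
  split; [by rewrite Ep L1f | by rewrite Eq L1b |].
  move=> j j' /andP [pj jq] Hj'.
  have nj : j != i by apply: Hni; rewrite pj ltnW.
  have nj' : j' != i by apply: Hni; rewrite Hj'; lia.
  case: (unl j) => [[a Ej]|Ej]; last by rewrite Ej eqxx in nj.
  case: (unl j') => [[b Ej']|Ej']; last by rewrite Ej' eqxx in nj'.
  subst j j'; rewrite L1b L1f; apply: E3; move: pj jq Hj'; rewrite Ep Eq !lv; splitifs; lia.
Qed.


Lemma v_zmap : is_zmap v.
Proof.
split; [split; [exact: insert_zigzag zA | exact: zY | exact: mu] | split].
- move=> k /=; have [H1 H2] := Ht1 k; by rewrite H1 Hhat H2.
- move=> j /=; case: (unl j) => [[a ->]|->].
    rewrite sv_lift ins_sing_lift; have [H1 H2] := Ht2 a; by rewrite H1 H2 Hzu.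
  rewrite sv_ii ins_sing_i; exact: sv_i_typ.
- move=> k p q; exact: v_fib.
- move=> k He; apply: Hemp => j; rewrite Hzu; exact: He.
Qed.

Lemma v_comp : zcomp v (face_zmap A i) = h.
Proof.
apply: zmap_ext => /=.
- exact: Hu.
- move=> k; have [H1 _] := Ht1 k; by rewrite -Hhat -H1 comp_id_r.
- move=> j; rewrite sv_lift; have [H1 _] := Ht2 j; by rewrite -H1 comp_id_r.
Qed.

Lemma v_unique (v' : zmap (insert_id A i) Y) : is_zmap v' ->
  zcomp v' (face_zmap A i) = h -> zms v' = u -> v' = v.
Proof.
move=> Hv' Hc Hs.
case: Hv' => [_ [T1 T2 F3 _]].
have Er : forall k, zmr v' k = zmr h k.
  by move=> k; rewrite -Hc /=; have [D _] := T1 k; rewrite /= in D; rewrite -D comp_id_r.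
have Es : forall j, zmsg v' (lift i j) = zmsg h j.
  move=> j; rewrite -Hc /=; have [D _] := T2 (lift i j).
  by rewrite /= ins_sing_lift in D; rewrite -D comp_id_r.
rewrite Hs in F3 T2.
apply: zmap_ext => //=.
move=> j; case: (unl j) => [[a ->]|->]; first by rewrite sv_lift Es.
rewrite sv_ii.
case: (@arg_minnP _ i (fun x => u x == u i) (fun x => x) (eqxx _)) => p /eqP Hp Hpmin.
case: (@arg_maxnP _ i (fun x => u x == u i) (fun x => x) (eqxx _)) => q /eqP Hq Hqmax.
have Hpq : forall j, u j = u i -> p <= j <= q.
  by move=> x /eqP Hx; apply/andP; split; [exact: Hpmin | exact: Hqmax].
have [G1 G2 G3] := F3 (u i) p q Hp Hq Hpq.
have [D _] := T2 i; rewrite /= ins_sing_i in D.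
case f : first.
  have pe : p = i.
    apply: ordE; have := first_spec f Hp; have := Hpmin i (eqxx _); lia.
  rewrite pe /= ins_fw_i -D comp_id_r in G1.
  by rewrite sv_i_first // G1 Er.
have [j0 [J1 J2 J3]] := notfirst (negbT f).
rewrite (sv_i_notfirst (negbT f) J1).
have J2' : bump i j0 = j0 := J2.
have := G3 (lift i j0) i; rewrite /= Es ins_bw_lift ins_fw_i -D comp_id_r => G.
symmetry; apply: G.
  have := Hpmin _ (introT eqP J3); have := Hqmax _ (eqxx (u i)); rewrite /=; lia.
lia.
Qed.

Lemma v_cocart : exists! v' : zmap (insert_id A i) Y,
  [/\ is_zmap v', zcomp v' (face_zmap A i) = h & zms v' = u].
Proof.
exists v; split; first by split; [exact: v_zmap | exact: v_comp | by []].
by move=> v' [H1 H2 H3]; symmetry; apply: v_unique.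
Qed.

End Cocart.

Lemma face_ok C (A : zigzag C) i : is_zigzag A -> is_zmap (face_zmap A i).
Proof.
move=> zA; split; first by split; [exact: zA | exact: insert_zigzag | exact: lift_mono].
split.
- move=> k /=; rewrite dom_id cod_id; split => //; exact: (esym (ins_reg_hat _ _)).
- by move=> j /=; rewrite dom_id cod_id ins_sing_lift.
- move=> k p q /= Hp Hq Hr.
  have pq : p = q by apply: (lift_inj (h:=i)); rewrite Hp Hq.
  subst q k.
  have [F1 F2 F3 F4] := zA p.
  have [G1 G2 G3 G4] := @insert_zigzag C A i zA (lift i p).
  rewrite /= ins_fw_lift ins_bw_lift in G1 G3.
  split.
  + by rewrite /= ins_fw_lift -G1 comp_id_r -F2 comp_id_l.
  + by rewrite /= ins_bw_lift -G3 comp_id_r -F4 comp_id_l.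
  + move=> j j' /andP [a b]; lia.
- move=> k /= He.
  case: (unliftP i k) => [j Ej|Ej]; first by exfalso; apply: (He j); rewrite Ej.
  subst k.
  have [G1 _ G3 _] := @insert_zigzag C A i zA i.
  rewrite /= ins_fw_i ins_bw_i dom_id in G1 G3.
  by rewrite ins_fw_i ins_bw_i -G1 -G3.
Qed.


Theorem lemma3p2 (C : Category) (A : zigzag C) (i : 'I_(zlen A).+1) :
  is_zigzag A ->
  is_zmap (face_zmap A i) /\ pi_cocartesian (face_zmap A i).
Proof.
move=> zA; split; first exact: face_ok.
move=> Y h Hh u mu Hu; exact: (v_cocart Hh mu Hu).
Qed.
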